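(* Let $G$ be a group and $A=\bigoplus_{g\in G}A_g$ a $G$-graded associative unital $k$-algebra (so $A_gA_h\subseteq A_{gh}$). For $g\in G$ let $\pi_g:A\to A_g$ be the projection onto the $g$-component, and let $B$ be the subalgebra of $\mathrm{End}_k(A)$ generated by $L(A)\cup\{\pi_g: g\in G\}$. Then $A$ is a critically compressible left $B$-module if and only if $A_e$ ($e$ the neutral element of $G$) is a left Ore domain and $A_e$ is large in $A$.
   Context: $L(A)=\{L_a:a\in A\}$, $L_a(x)=ax$; $A$ is a left $B$-module via $\varphi\cdot a=\varphi(a)$, whose submodules are the graded left ideals of $A$; $\mathrm{End}_B(A)\cong A_e$. $A_e$ is large in $A$ if $A_e\cap I\neq0$ for every nonzero graded left ideal $I$ of $A$. A left Ore domain is a domain $S$ with $Sa\cap Sb\neq0$ for nonzero $a,b$. A nonzero module is critically compressible if it embeds into each of its nonzero submodules and into none of its factor modules $M/N$ with $N\neq0$. *)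

(* Defs.v *)
From HB Require Import structures.
From mathcomp Require Import all_boot all_order all_algebra.
Set Implicit Arguments. Unset Strict Implicit. Unset Printing Implicit Defensive.
Import GRing.Theory.
Local Open Scope ring_scope.

(* The G-grading A = (+)_{g in G} A_g is given by the family of
   projections pi g : A -> A_g ⊆ A; the homogeneous component A_g is
   {x | pi g x = x}. *)

Definition homog (k : fieldType) (A : algType k) (G : groupType)
  (pi : G -> A -> A) (g : G) (x : A) : Prop := pi g x = x.

Definition grading (k : fieldType) (A : algType k) (G : groupType)
  (pi : G -> A -> A) : Prop :=
  [/\ (forall g (c : k) (x y : A), pi g (c *: x + y) = c *: pi g x + pi g y),
      (forall g x, pi g (pi g x) = pi g x),
      (forall g h x, g <> h -> pi g (pi h x) = 0),
      (forall x : A, exists s : seq G,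
          x = \sum_(g <- s) pi g x /\ (forall g, g \notin s -> pi g x = 0)) &
      (forall g h (x y : A), homog pi g x -> homog pi h y ->
          homog pi (g * h)%g (x * y))].

Definition Lmul (k : fieldType) (A : algType k) (a : A) : A -> A :=
  fun x => a * x.

(* B = the k-subalgebra of End_k(A) generated by L(A) ∪ {pi g | g in G}:
   the smallest set of maps A -> A containing these generators and closed
   under sums, k-scalar multiples and composition (the unit id = L_1 is
   among the generators). *)
Inductive inB (k : fieldType) (A : algType k) (G : groupType)
  (pi : G -> A -> A) : (A -> A) -> Prop :=
| inB_L (a : A) : inB pi (Lmul a)
| inB_pi (g : G) : inB pi (pi g)
| inB_add (f h : A -> A) : inB pi f -> inB pi h -> inB pi (fun x => f x + h x)
| inB_scale (c : k) (f : A -> A) : inB pi f -> inB pi (fun x => c *: f x)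
| inB_comp (f h : A -> A) : inB pi f -> inB pi h -> inB pi (fun x => f (h x)).

Definition Bsubmod (k : fieldType) (A : algType k) (G : groupType)
  (pi : G -> A -> A) (N : A -> Prop) : Prop :=
  [/\ N 0,
      (forall x y, N x -> N y -> N (x - y)) &
      (forall b x, inB pi b -> N x -> N (b x))].

Definition nonzero_sub (A : zmodType) (N : A -> Prop) : Prop :=
  exists x, N x /\ x <> 0.

Definition Bhom (k : fieldType) (A : algType k) (G : groupType)
  (pi : G -> A -> A) (f : A -> A) : Prop :=
  (forall x y, f (x + y) = f x + f y) /\
  (forall b x, inB pi b -> f (b x) = b (f x)).

Definition embeds_into_sub (k : fieldType) (A : algType k) (G : groupType)
  (pi : G -> A -> A) (N : A -> Prop) : Prop :=
  exists f : A -> A, Bhom pi f /\ injective f /\ (forall x, N (f x)).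

(* A map A -> A/N is
   represented by a set-theoretic lift f : A -> A (any map to A/N has one);
   it is a B-homomorphism iff it is one modulo N, and it is injective iff
   f x ∈ N implies x = 0. *)
Definition embeds_into_quot (k : fieldType) (A : algType k) (G : groupType)
  (pi : G -> A -> A) (N : A -> Prop) : Prop :=
  exists f : A -> A,
    (forall x y, N (f (x + y) - (f x + f y))) /\
    (forall b x, inB pi b -> N (f (b x) - b (f x))) /\
    (forall x, N (f x) -> x = 0).

Definition critically_compressible (k : fieldType) (A : algType k)
  (G : groupType) (pi : G -> A -> A) : Prop :=
  [/\ exists x : A, x <> 0,
      (forall N, Bsubmod pi N -> nonzero_sub N -> embeds_into_sub pi N) &
      (forall N, Bsubmod pi N -> nonzero_sub N -> ~ embeds_into_quot pi N)].

Definition graded_left_ideal (k : fieldType) (A : algType k) (G : groupType)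
  (pi : G -> A -> A) (I : A -> Prop) : Prop :=
  [/\ I 0,
      (forall x y, I x -> I y -> I (x - y)),
      (forall a x, I x -> I (a * x)) &
      (forall g x, I x -> I (pi g x))].

Definition Ae_left_Ore_domain (k : fieldType) (A : algType k) (G : groupType)
  (pi : G -> A -> A) : Prop :=
  [/\ (1 : A) <> 0,
      (forall x y, homog pi 1%g x -> homog pi 1%g y -> x * y = 0 ->
          x = 0 \/ y = 0) &
      (forall a b, homog pi 1%g a -> homog pi 1%g b -> a <> 0 -> b <> 0 ->
          exists s t, homog pi 1%g s /\ homog pi 1%g t /\
                      s * a = t * b /\ s * a <> 0)].

Definition Ae_large (k : fieldType) (A : algType k) (G : groupType)
  (pi : G -> A -> A) : Prop :=
  forall I, graded_left_ideal pi I -> nonzero_sub I ->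
    exists x, homog pi 1%g x /\ I x /\ x <> 0.

(* Main.v *)
Require Import Defs.
From HB Require Import structures.
From mathcomp Require Import all_boot all_order all_algebra.
From Stdlib Require Import Classical.
Set Implicit Arguments. Unset Strict Implicit. Unset Printing Implicit Defensive.
Import GRing.Theory.
Local Open Scope ring_scope.

Section S.
Variables (k : fieldType) (A : algType k) (G : groupType) (pi : G -> A -> A).
Hypothesis hgr : grading pi.

Lemma piD g x y : pi g (x + y) = pi g x + pi g y.
Proof. case: hgr => L _ _ _ _. by have := L g 1 x y; rewrite !scale1r. Qed.
Lemma pi0 g : pi g 0 = 0.
Proof. by move: (piD g 0 0); rewrite addr0 -{1}[pi g 0]addr0 => /addrI <-. Qed.
Lemma piZ g c x : pi g (c *: x) = c *: pi g x.
Proof. case: (hgr) => L _ _ _ _. by rewrite -[c *: x]addr0 L pi0 addr0. Qed.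
Lemma piN g x : pi g (- x) = - pi g x.
Proof. by rewrite -scaleN1r piZ scaleN1r. Qed.
Lemma piB g x y : pi g (x - y) = pi g x - pi g y.
Proof. by rewrite piD piN. Qed.
Lemma pi_sum g (s : seq G) (F : G -> A) :
  pi g (\sum_(i <- s) F i) = \sum_(i <- s) pi g (F i).
Proof.
elim: s => [|a s IH]; first by rewrite !big_nil pi0.
by rewrite !big_cons piD IH.
Qed.
Lemma pi_idem g x : pi g (pi g x) = pi g x.
Proof. by case: (hgr). Qed.
Lemma pi_orth g h x : g <> h -> pi g (pi h x) = 0.
Proof. by case: (hgr) => _ _ O _ _; apply: O. Qed.
Lemma ext0 x : (forall g, pi g x = 0) -> x = 0.
Proof.
move=> H; case: (hgr) => _ _ _ D _; have [s [-> _]] := D x.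
by rewrite big1_seq // => i _; rewrite H.
Qed.
Lemma ext x y : (forall g, pi g x = pi g y) -> x = y.
Proof.
move=> H; apply/eqP; rewrite -subr_eq0; apply/eqP/ext0 => g.
by rewrite piB H subrr.
Qed.
Lemma homog_pi g x : homog pi g (pi g x).
Proof. exact: pi_idem. Qed.
Lemma pi_homog_neq g h x : homog pi g x -> h <> g -> pi h x = 0.
Proof. by rewrite /homog => <- hg; rewrite pi_orth. Qed.
Lemma homog_mul g h x y : homog pi g x -> homog pi h y -> homog pi (g * h)%g (x * y).
Proof. by case: (hgr) => _ _ _ _ M; apply: M. Qed.

Lemma sum_pred1 (s : seq G) (a : G) (F : G -> A) : uniq s ->
  \sum_(i <- s) (if i == a then F i else 0) = if a \in s then F a else 0.
Proof.
elim: s => [|x s IH] /=; first by rewrite big_nil.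
case/andP => xs us; rewrite big_cons IH // in_cons.
case: eqVneq => [E|xa]; first by subst; rewrite (negbTE xs) addr0.
by rewrite add0r.
Qed.

Lemma decomp x : exists s : seq G, [/\ uniq s, x = \sum_(g <- s) pi g x &
  forall g, g \notin s -> pi g x = 0].
Proof.
case: (hgr) => _ _ _ D _; have [s0 [_ H0]] := D x.
exists (undup s0); split; first exact: undup_uniq.
  apply: ext => h; rewrite pi_sum.
  rewrite (eq_bigr (fun g => if g == h then pi h x else 0)); last first.
    move=> g _; case: eqVneq => [->|gh]; first exact: pi_idem.
    by apply: pi_orth => hg; rewrite hg eqxx in gh.
  rewrite (eq_bigr (fun g => if g == h then pi g x else 0)); last first.
    by move=> g _; case: eqVneq => [->|].
  rewrite sum_pred1 ?undup_uniq //; case: ifP => // /negbT.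
  by rewrite mem_undup => /H0.
by move=> g; rewrite mem_undup; apply: H0.
Qed.

Lemma pi_mulr x y g h : homog pi g y -> pi h (x * y) = pi (h * g^-1)%g x * y.
Proof.
move=> Hy; have [s [us Ex Hs]] := decomp x.
rewrite {1}Ex mulr_suml pi_sum.
rewrite (eq_bigr (fun f => if f == (h * g^-1)%g then pi f x * y else 0)); last first.
  move=> f _; have Hf := homog_mul (homog_pi f x) Hy.
  case: eqVneq => [E|fh]; first by move: Hf; rewrite E mulgVK.
  apply: (pi_homog_neq Hf) => E; move: fh; by rewrite E mulgK eqxx.
rewrite sum_pred1 //; case: ifP => // /negbT /Hs ->; by rewrite mul0r.
Qed.

Lemma pi_mulr1 x u g : homog pi 1%g u -> pi g (x * u) = pi g x * u.
Proof. by move=> Hu; rewrite (pi_mulr _ _ Hu) invg1 mulg1. Qed.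

Lemma homog1 : homog pi 1%g 1.
Proof.
set e := pi 1%g 1.
have He : homog pi 1%g e by exact: homog_pi.
have L : forall h y, homog pi h y -> e * y = y.
  move=> h y Hy; rewrite -{2}Hy -{2}[y]mul1r (pi_mulr _ _ Hy) mulgV //.
have L2 : forall x, e * x = x.
  move=> x; have [s [_ Ex _]] := decomp x.
  rewrite Ex mulr_sumr; apply: eq_bigr => g _; exact: L (homog_pi g x).
by rewrite /homog -/e -[e]mulr1 L2.
Qed.

Lemma Bhom_mul u : homog pi 1%g u ->
  forall b, inB pi b -> forall x, b x * u = b (x * u).
Proof.
move=> Hu b; elim=> {b}.
- by move=> a x; rewrite /Lmul mulrA.
- by move=> g x; rewrite pi_mulr1.
- by move=> f h _ IHf _ IHh x; rewrite mulrDl IHf IHh.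
- by move=> c f _ IH x; rewrite -scalerAl IH.
- by move=> f h _ IHf _ IHh x; rewrite IHf IHh.
Qed.

Lemma Bhom_mulP u : homog pi 1%g u -> Bhom pi (fun x => x * u).
Proof. move=> Hu; split; first by move=> x y; rewrite mulrDl.
by move=> b x Hb; rewrite Bhom_mul. Qed.

Lemma Bhom_char f : Bhom pi f -> (forall x, f x = x * f 1) /\ homog pi 1%g (f 1).
Proof.
case=> Ha Hb.
have F0 : f 0 = 0.
  by move: (Ha 0 0); rewrite addr0 -{1}[f 0]addr0 => /addrI <-.
have Fx : forall x, f x = x * f 1.
  by move=> x; rewrite -{1}[x]mulr1; apply: (Hb (Lmul x)); constructor.
split=> //.
have Hg : forall g, g <> 1%g -> pi g (f 1) = 0.
  move=> g g1; rewrite -(Hb (pi g)); last by constructor.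
  by rewrite (pi_homog_neq homog1 g1) F0.
rewrite /homog; apply: ext => h.
case: (eqVneq h 1%g) => [E|h1]; first by rewrite E pi_idem.
have h1' : h <> 1%g by exact/eqP.
by rewrite (Hg h) // pi_orth.
Qed.

Lemma gli_Bsub I : graded_left_ideal pi I -> Bsubmod pi I.
Proof.
case=> I0 IB IM IP; split=> // b x Hb Ix; elim: Hb x Ix => {b}.
- by move=> a x Ix; apply: (IM).
- by move=> g x Ix; apply: IP.
- move=> f h _ IHf _ IHh x Ix.
  have -> : f x + h x = f x - (0 - h x) by rewrite sub0r opprK.
  apply: (IB); first exact: IHf.
  apply: (IB); first exact: I0.
  exact: IHh.
- move=> c f _ IH x Ix.
  have -> : c *: f x = (c *: 1) * f x by rewrite -scalerAl mul1r.
  by apply: (IM); apply: IH.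
- by move=> f h _ IHf _ IHh x Ix; apply: IHf; apply: IHh.
Qed.

Lemma Bsub_gli N : Bsubmod pi N -> graded_left_ideal pi N.
Proof.
case=> N0 NB NM; split=> //.
- by move=> a x Nx; apply: (NM (Lmul a)) => //; constructor.
- by move=> g x Nx; apply: (NM (pi g)) => //; constructor.
Qed.

Lemma Bsub_add N x y : Bsubmod pi N -> N x -> N y -> N (x + y).
Proof.
case=> N0 NB _ Nx Ny.
have -> : x + y = x - (0 - y) by rewrite sub0r opprK.
by apply: (NB) => //; apply: (NB).
Qed.

Lemma Bsub_comp N x : Bsubmod pi N -> (forall g, N (pi g x)) -> N x.
Proof.
move=> HN H; have [s [_ Ex _]] := decomp x.
rewrite Ex; elim: s {Ex} => [|g s IH]; first by rewrite big_nil; case: HN.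
by rewrite big_cons; apply: Bsub_add.
Qed.

Lemma principal y : homog pi 1%g y -> Bsubmod pi (fun w => exists a, w = a * y).
Proof.
move=> Hy; apply: gli_Bsub; split.
- by exists 0; rewrite mul0r.
- by move=> _ _ [a ->] [b ->]; exists (a - b); rewrite mulrBl.
- by move=> c _ [a ->]; exists (c * a); rewrite mulrA.
- by move=> g _ [a ->]; exists (pi g a); rewrite pi_mulr1.
Qed.

Lemma lann y : homog pi 1%g y -> Bsubmod pi (fun w => w * y = 0).
Proof.
move=> Hy; apply: gli_Bsub; split.
- by rewrite mul0r.
- by move=> a b Ha Hb; rewrite mulrBl Ha Hb subrr.
- by move=> c a Ha; rewrite -mulrA Ha mulr0.
- by move=> g a Ha; rewrite -pi_mulr1 // Ha pi0.
Qed.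

Lemma fwd : critically_compressible pi -> Ae_left_Ore_domain pi /\ Ae_large pi.
Proof.
case=> [[x0 x0nz] Hsub Hquot].
have one_nz : (1:A) <> 0 by move=> E; apply: x0nz; rewrite -[x0]mulr1 E mulr0.
have emb : forall N, Bsubmod pi N -> nonzero_sub N -> exists u,
    [/\ homog pi 1%g u, N u, u <> 0 & forall z, z * u = 0 -> z = 0].
  move=> N HN NN; have [f [Hf [fi fN]]] := Hsub N HN NN.
  have [Fx Hu] := Bhom_char Hf.
  exists (f 1); split => //.
  - by move=> E; apply: one_nz; apply: fi; rewrite (Fx 0) mul0r.
  - by move=> z Hz; apply: fi; rewrite (Fx z) Hz (Fx 0) mul0r.
have noZD : forall y, homog pi 1%g y -> y <> 0 -> forall z, z * y = 0 -> z = 0.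
  move=> y Hy ynz z Hz; apply: NNPP => znz.
  have HN := lann Hy.
  apply: (Hquot _ HN); first by exists z.
  have NP : nonzero_sub (fun w => exists a, w = a * y).
    by exists y; split=> //; exists 1; rewrite mul1r.
  have [u [Hu [a Ea] unz Hinj]] := emb _ (principal Hy) NP.
  set a' := pi 1%g a.
  have Eu : u = a' * y by rewrite -Hu Ea pi_mulr1.
  exists (fun w => w * a'); split; [|split].
  - by move=> x1 y1 /=; rewrite (mulrDl x1 y1 a') subrr mul0r.
  - by move=> b x1 Hb; rewrite /= (Bhom_mul (homog_pi _ _) Hb) subrr mul0r.
  - by move=> w /= Hw; apply: Hinj; rewrite Eu mulrA.
have large : Ae_large pi.
  by move=> I HI NI; have [u [Hu Iu unz _]] := emb I (gli_Bsub HI) NI; exists u.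
split=> //; split=> //.
- move=> x y Hx Hy Hxy; case: (eqVneq y 0) => [->|ynz]; [by right|left].
  have ynz' : y <> 0 by apply/eqP.
  exact: (noZD y Hy ynz').
- move=> a b Ha Hb anz bnz.
  case: (classic (exists w, [/\ exists p, w = p * a, exists q, w = q * b & w <> 0]))
     => [[w [[p Ep] [q Eq] wnz]]|Hno].
  + have HI : graded_left_ideal pi
        (fun w => (exists p, w = p * a) /\ (exists q, w = q * b)).
      split.
      * by split; [exists 0|exists 0]; rewrite mul0r.
      * move=> _ _ [[p1 ->] [q1 E1]] [[p2 ->] [q2 E2]]; split.
          by exists (p1 - p2); rewrite mulrBl.
        by exists (q1 - q2); rewrite mulrBl E1 E2.
      * move=> c _ [[p1 ->] [q1 E1]]; split; first by exists (c * p1); rewrite mulrA.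
        by exists (c * q1); rewrite E1 mulrA.
      * move=> g _ [[p1 ->] [q1 E1]]; split.
          by exists (pi g p1); rewrite pi_mulr1.
        by exists (pi g q1); rewrite E1 pi_mulr1.
    have NI : nonzero_sub (fun w => (exists p, w = p * a) /\ (exists q, w = q * b)).
      by exists w; split => //; split; [exists p | exists q].
    have [x [Hx [[[p1 Ep1] [q1 Eq1]] xnz]]] := large _ HI NI.
    have E1 : pi 1%g p1 * a = x by rewrite -(pi_mulr1 _ _ Ha) -Ep1 Hx.
    have E2 : pi 1%g q1 * b = x by rewrite -(pi_mulr1 _ _ Hb) -Eq1 Hx.
    exists (pi 1%g p1), (pi 1%g q1); split; first exact: homog_pi.
    split; first exact: homog_pi.
    by rewrite E1 E2; split.
  + exfalso. apply: (Hquot _ (principal Hb)).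
      by exists b; split=> //; exists 1; rewrite mul1r.
    exists (fun w => w * a); split; [|split].
    - by move=> x1 y1; exists 0; rewrite /= (mulrDl x1 y1 a) subrr mul0r.
    - by move=> c x1 Hc; exists 0; rewrite /= (Bhom_mul Ha Hc) subrr mul0r.
    - move=> z [q Eq]; apply: (noZD a Ha anz); apply: NNPP => nz; apply: Hno.
      by exists (z * a); split => //; [exists z | exists q].
Qed.

Lemma bwd : Ae_left_Ore_domain pi -> Ae_large pi -> critically_compressible pi.
Proof.
case=> one_nz Hdom Hore Hlarge.
have inj : forall u, homog pi 1%g u -> u <> 0 -> forall z, z * u = 0 -> z = 0.
  move=> u Hu unz z Hz; apply: NNPP => znz.
  have NZ : nonzero_sub (fun w => w * u = 0) by exists z.
  have [x [Hx [Hxu xnz]]] := Hlarge _ (Bsub_gli (lann Hu)) NZ.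
  by case: (Hdom x u Hx Hu Hxu).
split.
- by exists 1.
- move=> N HN NN; have [u [Hu [Nu unz]]] := Hlarge N (Bsub_gli HN) NN.
  exists (fun x => x * u); split; first exact: Bhom_mulP.
  split.
  + move=> x y Exy; apply/eqP; rewrite -subr_eq0; apply/eqP.
    by apply: (inj u Hu unz); rewrite mulrBl Exy subrr.
  + by move=> x; case: (Bsub_gli HN) => _ _ IM _; apply: IM.
- move=> N HN NN [f [Fa [Fb Fi]]].
  have [u [Hu [Nu unz]]] := Hlarge N (Bsub_gli HN) NN.
  case: (Bsub_gli HN) => N0 NB NM NP.
  set v := f 1; set ve := pi 1%g v.
  have Nf0 : N (f 0).
    have := Fa 0 0; rewrite addr0 opprD addrA subrr sub0r => H.
    by have := NB _ _ N0 H; rewrite sub0r opprK.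
  have Npi : forall g, g <> 1%g -> N (pi g v).
    move=> g g1; have H : N (f (pi g 1) - pi g (f 1)) by apply: Fb; constructor.
    rewrite (pi_homog_neq homog1 g1) in H.
    by have := NB _ _ Nf0 H; rewrite opprB addrC subrK.
  have Nvve : N (v - ve).
    apply: (Bsub_comp HN) => g; rewrite piB; case: (eqVneq g 1%g) => [->|g1].
      by rewrite /ve pi_idem subrr.
    have g1' : g <> 1%g by apply/eqP.
    rewrite /ve (pi_orth _ g1') subr0; exact: Npi.
  have Hfz : forall z, N (f z - z * ve).
    move=> z; have H1 : N (f (Lmul z 1) - Lmul z (f 1)) by apply: Fb; constructor.
    rewrite /Lmul mulr1 in H1.
    have H2 := NM z _ Nvve.
    have -> : f z - z * ve = (f z - z * v) + z * (v - ve) by rewrite mulrBr addrA subrK.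
    exact: Bsub_add HN H1 H2.
  case: (eqVneq ve 0) => [ve0|venz].
  + by apply: one_nz; apply: Fi; have := Hfz 1; rewrite ve0 mulr0 subr0.
  + have venz' : ve <> 0 by apply/eqP.
    have [s [t [Hs [Ht [Est snz]]]]] := Hore ve u (homog_pi _ _) Hu venz' unz.
    apply: snz; have -> : s = 0.
      by apply: Fi; have := Bsub_add HN (Hfz s) (NM t u Nu); rewrite -Est subrK.
    by rewrite mul0r.
Qed.
End S.

Theorem proposition3p7 (k : fieldType) (A : algType k) (G : groupType)
  (pi : G -> A -> A) (hgr : grading pi) :
  critically_compressible pi <-> (Ae_left_Ore_domain pi /\ Ae_large pi).
Proof.
split; first exact: fwd.
by case; apply: bwd.
Qed.
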